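(* Let $k\ge2$ be an even integer and $Q_k(t)=t^k+k(t+1)^{k-1}-(t+1)^k$. Then there are constants $\bar C_k,\bar C_k'>0$ depending only on $k$ such that $$\bar C_k(t^{k-2}+1)\le Q_k(t)\le \bar C_k'(t^{k-2}+1)\quad\text{for all }t\in\mathbb{R}.$$ *)

(* Defs.v *)
From Stdlib Require Import Reals Lra Lia Arith.
Open Scope R_scope.

Definition Qk (k : nat) (t : R) : R :=
  t ^ k + INR k * (t + 1) ^ (k - 1) - (t + 1) ^ k.

(* Main.v *)
Require Import Defs.
From Stdlib Require Import Reals Arith Lra Lia.
Open Scope R_scope.

Fixpoint P (t : R) (m : nat) : R :=
  match m with
  | O => 1
  | S n => t * P t n + INR (n + 2) * (t + 1) ^ (S n)
  end.

Lemma Q_P m t : Qk (S (S m)) t = P t m.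
Proof.
  induction m as [|m IH].
  - unfold Qk; simpl; ring.
  - simpl P. rewrite <- IH. unfold Qk.
    replace (S (S (S m)) - 1)%nat with (S (S m)) by lia.
    replace (S (S m) - 1)%nat with (S m) by lia.
    rewrite plus_INR. rewrite !S_INR. cbn [pow]. simpl (INR 2). rewrite INR_0.
    set (a := t ^ m). set (b := (t + 1) ^ m). ring.
Qed.

Lemma P_pos t m : 0 <= t -> t ^ m <= P t m /\ 1 <= P t m.
Proof.
  intro ht. induction m as [|m [IH1 IH2]].
  - simpl; lra.
  - simpl P. cbn [pow].
    assert (h1 : t * t ^ m <= t * P t m) by (apply Rmult_le_compat_l; lra).
    assert (h2 : 1 <= INR (m + 2)) by (rewrite plus_INR; simpl; pose proof (pos_INR m); lra).
    assert (h3 : 1 <= (t + 1) ^ S m) by (apply pow_R1_Rle; lra).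
    assert (h4 : 0 <= t * P t m) by nra.
    cbn [pow] in h3.
    split; nra.
Qed.

Lemma negpow x n : (-1) ^ n * x ^ n = (- x) ^ n.
Proof. rewrite <- Rpow_mult_distr. f_equal. ring. Qed.

Lemma P_neg t m : t <= -1 -> (- t) ^ m <= (-1) ^ m * P t m.
Proof.
  intro ht. induction m as [|m IH].
  - simpl; lra.
  - cbn [P].
    replace ((-1) ^ S m * (t * P t m + INR (m + 2) * (t + 1) ^ S m))
      with ((- t) * ((-1) ^ m * P t m) + INR (m + 2) * ((-1) ^ S m * (t + 1) ^ S m))
      by (cbn [pow]; ring).
    rewrite negpow.
    assert (h1 : 0 <= (- (t + 1)) ^ S m) by (apply pow_le; lra).
    assert (h2 : 0 <= INR (m + 2)) by apply pos_INR.
    assert (h3 : (- t) * (- t) ^ m <= (- t) * ((-1) ^ m * P t m))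
      by (apply Rmult_le_compat_l; lra).
    cbn [pow]. cbn [pow] in h1. nra.
Qed.

Lemma P_upper m : exists B, 0 < B /\ forall t, Rabs (P t m) <= B * (Rabs t + 1) ^ m.
Proof.
  induction m as [|m [B [HB IH]]].
  - exists 1. split; [lra|]. intro t. simpl. rewrite Rabs_R1. lra.
  - exists (B + INR (m + 2)). split.
    { pose proof (pos_INR (m+2)); lra. }
    intro t. simpl P.
    assert (h2 : 0 <= INR (m + 2)) by apply pos_INR.
    assert (hs : Rabs ((t + 1) ^ S m) <= (Rabs t + 1) ^ S m).
    { rewrite <- RPow_abs. apply pow_incr. split; [apply Rabs_pos|].
      pose proof (Rabs_triang t 1). rewrite Rabs_R1 in H. lra. }
    assert (hp : 0 <= (Rabs t + 1) ^ m) by (apply pow_le; pose proof (Rabs_pos t); lra).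
    pose proof (IH t) as Ht.
    pose proof (Rabs_pos t) as Hat.
    eapply Rle_trans. apply Rabs_triang.
    rewrite (Rabs_mult t), (Rabs_mult (INR _)). rewrite (Rabs_right (INR (m+2))) by lra.
    assert (Rabs t * Rabs (P t m) <= Rabs t * (B * (Rabs t + 1) ^ m))
      by (apply Rmult_le_compat_l; lra).
    assert (INR (m+2) * Rabs ((t + 1) ^ S m) <= INR (m+2) * (Rabs t + 1) ^ S m)
      by (apply Rmult_le_compat_l; lra).
    cbn [pow] in *. nra.
Qed.

Lemma pow_bound a m : 0 <= a -> (a + 1) ^ m <= 2 ^ m * (a ^ m + 1).
Proof.
  intro ha. assert (h0 : 0 <= a ^ m) by (apply pow_le; lra).
  assert (h2 : 0 <= 2 ^ m) by (apply pow_le; lra).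
  destruct (Rle_dec a 1).
  - assert ((a + 1) ^ m <= 2 ^ m) by (apply pow_incr; lra). nra.
  - assert ((a + 1) ^ m <= (2 * a) ^ m) by (apply pow_incr; lra).
    rewrite Rpow_mult_distr in H. nra.
Qed.

Lemma even_neg x q : (- x) ^ (2 * q) = x ^ (2 * q).
Proof. rewrite !pow_mult. f_equal. ring. Qed.

Lemma even_nonneg x q : 0 <= x ^ (2 * q).
Proof. rewrite pow_mult. apply pow_le. nra. Qed.

Lemma half_le n : (/ 2) ^ n <= 1.
Proof. rewrite <- (pow1 n). apply pow_incr. lra. Qed.

Theorem lemmaA2 (k : nat) (hk2 : (2 <= k)%nat) (hkeven : Nat.Even k) :
  exists C C' : R, 0 < C /\ 0 < C' /\
    forall t : R, C * (t ^ (k - 2) + 1) <= Qk k t /\ Qk k t <= C' * (t ^ (k - 2) + 1).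
Proof.
  destruct hkeven as [p Hp].
  set (q := (p - 1)%nat).
  assert (Hk : k = S (S (2 * q))) by (unfold q; lia).
  assert (Hm : (k - 2)%nat = (2 * q)%nat) by lia.
  rewrite Hm. rewrite Hk. clear Hm Hp hk2.
  destruct (P_upper (2 * q)) as [B [HB HU]].
  exists ((/ 2) ^ (S (S (S (2 * q))))), (B * 2 ^ (2 * q)).
  split; [apply pow_lt; lra|]. split.
  { apply Rmult_lt_0_compat; [lra| apply pow_lt; lra]. }
  intro t. rewrite Q_P.
  set (m := (2 * q)%nat) in *.
  assert (hm0 : 0 <= t ^ m) by apply even_nonneg.
  assert (habs : Rabs t ^ m = t ^ m).
  { rewrite RPow_abs. apply Rabs_right. lra. }
  split.
  - assert (hC : (/ 2) ^ S (S (S m)) <= / 2).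
    { cbn [pow]. pose proof (half_le m). assert (0 <= (/2)^m) by (apply pow_le; lra). nra. }
    assert (hC0 : 0 < (/ 2) ^ S (S (S m))) by (apply pow_lt; lra).
    destruct (Rle_dec 0 t) as [h0|h0].
    + destruct (P_pos t m h0). nra.
    + destruct (Rle_dec t (-1)) as [h1|h1].
      * pose proof (P_neg t m h1) as H.
        unfold m in H. rewrite pow_1_even, even_neg in H. fold m in H.
        assert (1 <= t ^ m).
        { unfold m. rewrite <- even_neg. apply pow_R1_Rle. lra. }
        nra.
      * rewrite <- Q_P. unfold Qk.
        replace (S (S m) - 1)%nat with (S m) by lia.
        replace ((t + 1) ^ S (S m)) with ((t + 1) * (t + 1) ^ S m) by reflexivity.
        assert (hs : 0 <= (t + 1) ^ S m) by (apply pow_le; lra).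
        assert (hk : 2 <= INR (S (S m))) by (rewrite !S_INR; pose proof (pos_INR m); lra).
        assert (ht2 : t ^ S (S m) = (- t) ^ S (S m)).
        { replace (S (S m)) with (2 * S q)%nat by (unfold m; lia). rewrite even_neg. reflexivity. }
        assert (htm : t ^ m <= 1).
        { unfold m. rewrite <- even_neg. rewrite <- (pow1 (2*q)). apply pow_incr. lra. }
        assert (hQ : t ^ S (S m) + (t + 1) ^ S m <= t ^ S (S m) + INR (S (S m)) * (t + 1) ^ S m - (t + 1) * (t + 1) ^ S m) by nra.
        assert (hT : (/ 2) ^ S (S m) <= t ^ S (S m) + (t + 1) ^ S m).
        { assert (0 <= t ^ S (S m)) by (rewrite ht2; apply pow_le; lra).
          destruct (Rle_dec (/ 2) (t + 1)).
          - assert ((/2) ^ S m <= (t + 1) ^ S m) by (apply pow_incr; lra).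
            assert ((/2) ^ S (S m) <= (/2) ^ S m).
            { cbn [pow]. assert (0 <= (/2)^m) by (apply pow_le; lra). nra. }
            lra.
          - rewrite ht2. assert ((/2) ^ S (S m) <= (- t) ^ S (S m)) by (apply pow_incr; lra).
            lra. }
        replace ((/ 2) ^ S (S (S m))) with (/2 * (/ 2) ^ S (S m)) by reflexivity.
        assert (0 <= (/2) ^ S (S m)) by (apply pow_le; lra).
        nra.
  - pose proof (HU t) as H.
    pose proof (pow_bound (Rabs t) m (Rabs_pos t)) as H2.
    rewrite habs in H2.
    pose proof (Rle_abs (P t m)).
    assert (B * (Rabs t + 1) ^ m <= B * (2 ^ m * (t ^ m + 1))) by (apply Rmult_le_compat_l; lra).
    nra.
Qed.
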